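(* Consider an $\mathbb{H}_{2n+1}$-structure on $\mathbb{P}V$ such that $T$ fixes every point of the boundary hyperplane $\mathbb{P}V'$. For a point $o$ in the open orbit, let $v(o)$ denote the unique point of $\overline{\mathbb{I}\cdot o}\setminus\mathbb{I}\cdot o$. Then $v(o)$ does not depend on the choice of $o$ in the open orbit.
   Context: Work over $\mathbb{C}$, $n\ge1$. The Heisenberg group $\mathbb{H}_{2n+1}$ is $\mathbb{W}\times\mathbb{C}$ ($\mathbb{W}$ a $2n$-dimensional space with non-degenerate skew form $\omega$) with law $(w_1,t_1)(w_2,t_2)=(w_1+w_2,t_1+t_2+\tfrac12\omega(w_1,w_2))$; $T=(0,1)$, and $\mathbb{I}=\mathbb{C}T$ is its center. $V\cong\mathbb{C}^{2n+2}$. An $\mathbb{H}_{2n+1}$-structure on $\mathbb{P}V$ is an effective algebraic action with a dense open orbit; its boundary (the complement of the open orbit) is a hyperplane $\mathbb{P}V'$. For $o$ in the open orbit, $\overline{\mathbb{I}\cdot o}$ is a projective line and $\overline{\mathbb{I}\cdot o}\setminus\mathbb{I}\cdot o$ is a single point. *)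

(* Defs.v *)
(* The base field C is the complex numbers, realised as
   R[i] = complex R for an arbitrary R : realType (a model of the reals). *)
From HB Require Import structures.
From mathcomp Require Import all_boot all_order all_algebra.
From mathcomp Require Import reals.
From mathcomp Require Import complex.
From mathcomp Require mpoly.

Set Implicit Arguments.
Unset Strict Implicit.
Unset Printing Implicit Defensive.

Import Order.TTheory GRing.Theory Num.Theory.
Local Open Scope ring_scope.

Section Heis.
Variable C : fieldType.

Definition polyfun (m : nat) (f : 'rV[C]_m -> C) : Prop :=
  exists p : mpoly.mpoly m C, forall x : 'rV[C]_m,
    f x = mpoly.meval (fun i => x 0 i) p.

Definition heis_elt (n : nat) := ('rV[C]_(n.*2) * C)%type.

Definition heis_omega (n : nat) (Om : 'M[C]_(n.*2)) (w1 w2 : 'rV[C]_(n.*2)) : C :=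
  (w1 *m Om *m w2^T) 0 0.

Definition heis_mul (n : nat) (Om : 'M[C]_(n.*2)) (g h : heis_elt n) : heis_elt n :=
  (g.1 + h.1, g.2 + h.2 + 2^-1 * heis_omega Om g.1 h.1).

Definition heis_one (n : nat) : heis_elt n := (0, 0).

Definition heis_T (n : nat) : heis_elt n := (0, 1).

(** Points of P V, V = C^(2n+2): nonzero column vectors up to scalars. *)
Definition proj_eq (N : nat) (u v : 'cV[C]_N) : Prop :=
  exists2 c : C, c != 0 & u = c *: v.

Definition alg_rep (n : nat) (Om : 'M[C]_(n.*2))
    (rho : heis_elt n -> 'M[C]_(n.*2.+2)) : Prop :=
  [/\ rho (heis_one n) = 1%:M,
      (forall g h, rho (heis_mul Om g h) = rho g *m rho h) &
      (forall i j, polyfun (fun x : 'rV[C]_(n.*2 + 1) =>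
          rho (lsubmx x, rsubmx x 0 0) i j))].

Definition pv_effective (n : nat) (rho : heis_elt n -> 'M[C]_(n.*2.+2)) : Prop :=
  forall h, (exists c : C, rho h = c%:M) -> h = heis_one n.

Definition pv_orbit (n : nat) (rho : heis_elt n -> 'M[C]_(n.*2.+2))
    (S : heis_elt n -> Prop) (o p : 'cV[C]_(n.*2.+2)) : Prop :=
  exists2 h, S h & proj_eq p (rho h *m o).

Definition whole_group (n : nat) (h : heis_elt n) : Prop := True.

Definition center_I (n : nat) (h : heis_elt n) : Prop := exists t : C, h = (0, t).

(** A set of points of P V is represented by a
    scalar-invariant predicate on nonzero vectors. *)
Definition zar_closed (N : nat) (Z : 'cV[C]_N -> Prop) : Prop :=
  exists s : seq (mpoly.mpoly N C), forall v : 'cV[C]_N, v != 0 ->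
    (Z v <-> all (fun p => mpoly.meval (fun i => v i 0) p == 0) s).

Definition zar_open (N : nat) (U : 'cV[C]_N -> Prop) : Prop :=
  zar_closed (fun v => ~ U v).

Definition zar_closure (N : nat) (S : 'cV[C]_N -> Prop) (p : 'cV[C]_N) : Prop :=
  forall f : mpoly.mpoly N C,
    (forall v, v != 0 -> S v -> mpoly.meval (fun i => v i 0) f = 0) ->
    mpoly.meval (fun i => p i 0) f = 0.

Definition heis_structure (n : nat) (Om : 'M[C]_(n.*2))
    (rho : heis_elt n -> 'M[C]_(n.*2.+2)) (o0 : 'cV[C]_(n.*2.+2)) : Prop :=
  [/\ alg_rep Om rho, pv_effective rho, o0 != 0,
      zar_open (pv_orbit rho (@whole_group n) o0) &
      (forall p, p != 0 -> zar_closure (pv_orbit rho (@whole_group n) o0) p)].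

End Heis.

(* Main.v *)
Require Import Defs.
From HB Require Import structures.
From mathcomp Require Import all_boot all_order all_algebra.
From mathcomp Require Import reals.
From mathcomp Require Import complex.
From mathcomp Require mpoly.
From mathcomp Require Import ring zify.
From Stdlib Require Import Classical.
Import Order.TTheory GRing.Theory Num.Theory.
Local Open Scope ring_scope.
Set Implicit Arguments. Unset Strict Implicit. Unset Printing Implicit Defensive.
Section P.
Variable C : numClosedFieldType.
Definition pfun (f : C -> C) := exists p : {poly C}, forall x, f x = p.[x].

Lemma poly_nat0 (p : {poly C}) : (forall m : nat, p.[m%:R] = 0) -> p = 0.
Proof.
move=> H; apply/eqP; apply/negPn/negP => p0.
have H1 : all (root p) [seq m%:R | m <- iota 0 (size p)].
  by apply/allP => x /mapP [m _ ->]; apply/rootP; exact: H.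
have H2 : uniq [seq m%:R : C | m <- iota 0 (size p)].
  by rewrite map_inj_uniq ?iota_uniq // => x y /eqP; rewrite eqr_nat => /eqP.
by have := max_poly_roots p0 H1 H2; rewrite size_map size_iota ltnn.
Qed.

Lemma pfun_nat0 f : pfun f -> (forall m : nat, f m%:R = 0) -> forall x, f x = 0.
Proof.
case=> p Hp H x; rewrite Hp (@poly_nat0 p) ?horner0 // => m; by rewrite -Hp.
Qed.

Lemma pfun_geom f c a : pfun f -> (forall m : nat, f m%:R = c ^+ m * a) -> a != 0 -> c = 1.
Proof.
case=> p Hp H a0.
have q0 : p \Po ('X + 1%:P) - c *: p = 0.
  apply: poly_nat0 => m.
  rewrite hornerD hornerN hornerZ horner_comp hornerD hornerX hornerC natr1 -!Hp !H.
  by rewrite exprS mulrA subrr.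
have p0 : p != 0.
  apply/eqP=> p0; move: (Hp 0); rewrite p0 horner0 -(mulr0n 1) H expr0 mul1r.
  by move/eqP; rewrite (negbTE a0).
have := congr1 (fun r : {poly C} => r`_(size p).-1) q0.
rewrite coefB coefZ coef0.
rewrite -{1}(size_comp_poly2 p (size_XaddC 1)) -/(lead_coef _) lead_coef_comp ?size_XaddC //.
rewrite lead_coefXaddC expr1n mulr1 -/(lead_coef p).
move/eqP; rewrite -{1}(mul1r (lead_coef p)) -mulrBl mulf_eq0 lead_coef_eq0 (negbTE p0) orbF.
by rewrite subr_eq0 => /eqP.
Qed.

Lemma meval_line k (p : mpoly.mpoly k C) (a b : 'I_k -> C) :
  pfun (fun s => mpoly.meval (fun i => a i + s * b i) p).
Proof.
exists (\sum_(m <- mpoly.msupp p) mpoly.mcoeff m p *: \prod_(i < k) ((a i)%:P + 'X * (b i)%:P) ^+ (mpoly.fun_of_multinom m i)).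
move=> s; rewrite mpoly.mevalE horner_sum; apply: eq_bigr => m _.
rewrite hornerZ horner_prod; congr (_ * _); apply: eq_bigr => i _.
by rewrite horner_exp hornerD hornerC hornerM hornerC hornerX.
Qed.
End P.

Section L.
Variable C : numClosedFieldType.

Lemma eig_in N (E A : 'M[C]_N) : E != 0 -> (E *m A <= E)%MS ->
  exists c (v : 'rV_N), [/\ v != 0, (v <= E)%MS & v *m A = c *: v].
Proof.
move=> E0 EA.
set B := row_base E.
have BE : (B :=: E)%MS := eq_row_base E.
have BsE : (B <= E)%MS by rewrite BE.
have BAB : (B *m A <= B)%MS.
  by rewrite BE (submx_trans _ EA) // submxMr.
set Cm := B *m A *m pinvmx B.
have CB : Cm *m B = B *m A := mulmxKpV BAB.
have r0 : \rank E != 0%N by rewrite mxrank_eq0.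
have [c] : exists c, root (char_poly Cm) c.
  by apply/closed_rootP; rewrite size_char_poly eqSS.
rewrite -eigenvalue_root_char => /eigenvalueP [u uC u0].
exists c, (u *m B); split.
- by rewrite mulmx_free_eq0 ?row_base_free.
- exact: submx_trans (submxMl u B) BsE.
- by rewrite -mulmxA -CB mulmxA uC scalemxAl.
Qed.

Lemma common_eig N (S : 'M[C]_N -> Prop) k : forall E : 'M[C]_N,
  (\rank E <= k)%N -> E != 0 ->
  (forall A, S A -> (E *m A <= E)%MS) ->
  (forall A B, S A -> S B -> E *m A *m B = E *m B *m A) ->
  exists2 v : 'rV_N, v != 0 & (v <= E)%MS /\ forall A, S A -> exists c, v *m A = c *: v.
Proof.
elim: k => [|k IH] E rk E0 inv com.
  by move: rk; rewrite leqn0 mxrank_eq0 (negbTE E0).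
case: (classic (forall A, S A -> exists c, E *m A = c *: E)) => [Hall|].
  have : ~~ [forall i, row i E == 0].
    apply: contra E0 => /forallP H; apply/eqP/row_matrixP => i; rewrite row0; exact/eqP.
  rewrite negb_forall => /existsP [i Ei].
  exists (row i E) => //; split; first exact: row_sub.
  move=> A SA; have [c Hc] := Hall A SA; exists c.
  by rewrite -row_mul Hc; apply/rowP => j; rewrite !mxE.
move=> Hn; have [A HA] := not_all_ex_not _ _ Hn; have [SA HA2] := imply_to_and _ _ HA; have nsc := not_ex_all_not _ _ HA2.
have [c [v [v0 vE vA]]] := eig_in E0 (inv A SA).
set E' := (E :&: kermx (A - c%:M))%MS.
have E'E : (E' <= E)%MS := capmxSl _ _.
have E'K : E' *m (A - c%:M) = 0.
  by apply/eqP; rewrite -sub_kermx; exact: capmxSr.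
have E'A : E' *m A = c *: E'.
  by move/eqP: E'K; rewrite mulmxBr subr_eq0 mul_mx_scalar => /eqP.
have [X EX] := submxP E'E.
have vE' : (v <= E')%MS.
  by rewrite sub_capmx vE sub_kermx mulmxBr vA mul_mx_scalar subrr eqxx.
have [w w0 [wE' Hw]] : exists2 w : 'rV_N, w != 0 & (w <= E')%MS /\ forall A, S A -> exists c, w *m A = c *: w.
  apply: (IH E').
  - have : (\rank E' < \rank E)%N.
      rewrite (ltn_leqif (mxrank_leqif_sup E'E)).
      apply/negP => EE'; apply: (nsc c).
      have : (E <= kermx (A - c%:M))%MS := submx_trans EE' (capmxSr _ _).
      by rewrite sub_kermx mulmxBr subr_eq0 mul_mx_scalar => /eqP.
    by move=> h; apply: leq_trans h rk.
  - apply: contraNneq v0 => E'0; move: vE'; rewrite E'0 submx0; by [].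
  - move=> B SB; rewrite sub_capmx; apply/andP; split.
      exact: submx_trans (submxMr B E'E) (inv B SB).
    have hc : E' *m B *m A = E' *m A *m B by rewrite EX -!(mulmxA X) com.
    by rewrite sub_kermx mulmxBr hc E'A -scalemxAl mul_mx_scalar subrr.
  - by move=> A' B' SA' SB'; rewrite EX -!(mulmxA X) com.
exists w => //; split => //; exact: submx_trans wE' E'E.
Qed.
End L.
Section Extra.
Variable C : numClosedFieldType.

Lemma pfun_lin N (F : 'I_N -> C -> C) (a : 'I_N -> C) (c0 c1 : C) :
  (forall j, pfun (F j)) -> pfun (fun x => c0 + c1 * x + \sum_j a j * F j x).
Proof.
move=> H; have [P HP] := fin_all_exists H.
exists (c0%:P + c1%:P * 'X + \sum_j a j *: P j) => x.
rewrite hornerD hornerD hornerC hornerM hornerC hornerX horner_sum; congr (_ + _).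
by apply: eq_bigr => j _; rewrite hornerZ HP.
Qed.

Lemma pfun_aff (f : C -> C) a b : pfun f -> pfun (fun x => f (x * a + b)).
Proof.
case=> p Hp; exists (p \Po ('X * a%:P + b%:P)) => x.
by rewrite horner_comp hornerD hornerM hornerX !hornerC Hp.
Qed.

Lemma nz_col N (v : 'cV[C]_N) : v != 0 -> exists i, v i 0 != 0.
Proof.
move=> v0; have : ~~ [forall i, v i 0 == 0].
  apply: contra v0 => /forallP H; apply/eqP/colP => i; rewrite mxE; exact/eqP.
by rewrite negb_forall => /existsP.
Qed.

Lemma nz_row N (v : 'rV[C]_N) : v != 0 -> exists i, v 0 i != 0.
Proof.
move=> v0; have : ~~ [forall i, v 0 i == 0].
  apply: contra v0 => /forallP H; apply/eqP/rowP => i; rewrite mxE; exact/eqP.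
by rewrite negb_forall => /existsP.
Qed.

Definition lf N (l : 'rV[C]_N) (v : 'cV[C]_N) : C := \sum_j l 0 j * v j 0.

Lemma lf_mul N (l : 'rV[C]_N) v : lf l v = (l *m v) 0 0.
Proof. by rewrite /lf mxE. Qed.

Lemma lfD N (l : 'rV[C]_N) v w : lf l (v + w) = lf l v + lf l w.
Proof. by rewrite /lf -big_split; apply: eq_bigr => j _; rewrite mxE mulrDr. Qed.

Lemma lfZ N (l : 'rV[C]_N) a v : lf l (a *: v) = a * lf l v.
Proof. by rewrite /lf mulr_sumr; apply: eq_bigr => j _; rewrite mxE mulrCA. Qed.

Lemma lfB N (l : 'rV[C]_N) v w : lf l (v - w) = lf l v - lf l w.
Proof. by rewrite /lf -sumrB; apply: eq_bigr => j _; rewrite !mxE mulrBr. Qed.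

Lemma lfZl N (l : 'rV[C]_N) a v : lf (a *: l) v = a * lf l v.
Proof. by rewrite /lf mulr_sumr; apply: eq_bigr => j _; rewrite mxE mulrA. Qed.

Lemma entry_sub m k (A B : 'M[C]_(m, k)) i j : (A - B) i j = A i j - B i j.
Proof. by rewrite !mxE. Qed.

Lemma lf0r N (l : 'rV[C]_N) : lf l 0 = 0.
Proof. by rewrite /lf big1 // => j _; rewrite mxE mulr0. Qed.

Lemma lf_row N (l1 l2 : 'rV[C]_N) a b v : lf (a *: l1 - b *: l2) v = a * lf l1 v - b * lf l2 v.
Proof.
rewrite /lf mulr_sumr mulr_sumr -sumrB; apply: eq_bigr => j _.
by rewrite !mxE mulrBl !mulrA.
Qed.

Lemma lf_delta N (i : 'I_N) v : lf (delta_mx 0 i) v = v i 0.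
Proof.
rewrite /lf (bigD1 i) //= mxE !eqxx mul1r big1 ?addr0 // => k ki.
by rewrite mxE (negbTE ki) andbF mul0r.
Qed.

Lemma lfM N (l : 'rV[C]_N) (M : 'M[C]_N) v : lf (l *m M) v = lf l (M *m v).
Proof. by rewrite !lf_mul mulmxA. Qed.

Lemma mat_colP N (A B : 'M[C]_N) : (forall v : 'cV_N, A *m v = B *m v) -> A = B.
Proof.
move=> H; apply/matrixP => i j; have := congr1 (fun M : 'cV[C]_N => M i 0) (H (delta_mx j 0)).
by rewrite -!colE !mxE.
Qed.
End Extra.

Section Lin.
Variable C : numClosedFieldType.
Import mpoly.
Definition linp N (l : 'rV[C]_N) : mpoly.mpoly N C :=
  \sum_(i < N) l 0 i *: mpoly.mpolyX C (mpoly.mnm1 i).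

Lemma meval_lin N (l : 'rV[C]_N) (v : 'cV[C]_N) : mpoly.meval (fun i => v i 0) (linp l) = lf l v.
Proof.
rewrite /linp raddf_sum /lf; apply: eq_bigr => i _.
by rewrite /= mpoly.mevalZ mpoly.mevalXU.
Qed.

End Lin.
Section Main.
Variables (C : numClosedFieldType) (n : nat) (Om : 'M[C]_(n.*2))
  (rho : heis_elt C n -> 'M[C]_(n.*2.+2)) (o0 : 'cV[C]_(n.*2.+2)).
Hypothesis rho1 : rho (heis_one C n) = 1%:M.
Hypothesis rhoM : forall g h, rho (heis_mul Om g h) = rho g *m rho h.
Hypothesis rhoP : forall i j, polyfun (fun x : 'rV[C]_(n.*2 + 1) =>
          rho (lsubmx x, rsubmx x 0 0) i j).
Hypothesis eff : pv_effective rho.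
Hypothesis dense : forall p, p != 0 -> zar_closure (pv_orbit rho (@whole_group C n) o0) p.
Hypothesis HT : forall v : 'cV[C]_(n.*2.+2), v != 0 ->
       ~ pv_orbit rho (@whole_group C n) o0 v ->
       proj_eq (rho (heis_T C n) *m v) v.

Local Notation N := (n.*2.+2).
Definition U (t : C) : 'M[C]_N := rho (0, t).

Lemma om0l x : heis_omega Om 0 x = 0.
Proof. by rewrite /heis_omega !mul0mx mxE. Qed.
Lemma om0r x : heis_omega Om x 0 = 0.
Proof. by rewrite /heis_omega trmx0 mulmx0 mxE. Qed.

Lemma U_add s t : U (s + t) = U s *m U t.
Proof. by rewrite /U -rhoM /heis_mul /= om0l mulr0 !addr0. Qed.

Lemma U0 : U 0 = 1%:M.
Proof. by rewrite /U -rho1. Qed.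

Lemma U_comm t h : U t *m rho h = rho h *m U t.
Proof.
case: h => w s; rewrite /U -!rhoM /heis_mul /= om0l om0r mulr0 !addr0 add0r.
by rewrite (addrC t).
Qed.

Lemma rho_split w t : rho (w, t) = rho (w, 0) *m U t.
Proof. by rewrite /U -rhoM /heis_mul /= om0r mulr0 !addr0 add0r. Qed.

Lemma rho_ww w1 w2 : rho (w1, 0) *m rho (w2, 0) =
  rho (w1 + w2, 0) *m U (2^-1 * heis_omega Om w1 w2).
Proof. by rewrite -rhoM -rho_split /heis_mul /= addr0 add0r. Qed.

Lemma rho_inv h : exists s, rho h *m rho (- h.1, - h.2) = U s.
Proof.
exists (2^-1 * heis_omega Om h.1 (- h.1)).
by rewrite /U -rhoM /heis_mul /= !subrr add0r.
Qed.

Lemma U_pfun i j s : pfun (fun x => U (x * s) i j).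
Proof.
have [p Hp] := rhoP i j.
pose b : 'rV[C]_(n.*2 + 1) := row_mx 0 (1%:M : 'M_1).
have [q Hq] := meval_line p (fun _ => 0) (fun k => s * b 0 k).
exists q => x; rewrite -Hq /U.
have := Hp (row_mx 0 ((x * s)%:M : 'M_1)).
rewrite row_mxKl row_mxKr mxE eqxx mulr1n => ->.
apply: mpoly.meval_eq => k.
have e : row_mx 0 ((x * s)%:M : 'M_1) = (x * s) *: b.
  by rewrite /b scale_row_mx scaler0 scalemx1.
by rewrite e mxE add0r mulrA.
Qed.

Lemma one_neq0 : (1%:M : 'M[C]_N) != 0.
Proof.
apply/negP => /eqP/matrixP/(_ ord0 ord0); rewrite !mxE eqxx /= => /eqP.
by rewrite oner_eq0.
Qed.

Lemma xi0_ex : exists2 x0 : 'rV[C]_N, x0 != 0 & forall s, x0 *m U s = x0.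
Proof.
have com : forall A B, (exists s, A = U s) -> (exists s, B = U s) ->
    1%:M *m A *m B = 1%:M *m B *m A.
  by move=> A B [s ->] [t ->]; rewrite !mul1mx -!U_add addrC.
have [x0 x00 [_ Hx]] := @common_eig C N (fun A => exists s, A = U s) N 1%:M
  (rank_leq_col _) one_neq0 (fun A _ => submx1 _) com.
exists x0 => // s; have [c Hc] := Hx (U s) (ex_intro _ s erefl).
suff c1 : c = 1 by rewrite Hc c1 scale1r.
have [i xi] := nz_row x00.
apply: (@pfun_geom _ (fun y => (x0 *m U (y * s)) 0 i) c (x0 0 i)) => //.
  have [p Hp] := @pfun_lin C N (fun j x => U (x * s) j i) (fun j => x0 0 j) 0 0 (fun j => U_pfun j i s).
  by exists p => x; rewrite -Hp mxE mul0r !add0r.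
have pw : forall m, x0 *m U (m%:R * s) = c ^+ m *: x0.
  elim=> [|m IHm]; first by rewrite mul0r U0 mulmx1 scale1r.
  by rewrite -natr1 mulrDl mul1r U_add mulmxA IHm -scalemxAl Hc scalerA -exprSr.
by move=> m; rewrite pw mxE.
Qed.

Definition Pfix (E : 'M[C]_N) := forall s, E *m U s = E.

Lemma grow E h : Pfix E -> ~ (E *m rho h <= E)%MS ->
  Pfix (E + E *m rho h)%MS /\ (\rank E < \rank (E + E *m rho h)%MS)%N.
Proof.
move=> PE Hh; split.
  have sub : (E + E *m rho h <= col_mx E (E *m rho h))%MS by rewrite addsmxE.
  have [X EX] := submxP sub.
  move=> s; rewrite EX -mulmxA mul_col_mx PE -mulmxA -U_comm mulmxA PE //.
rewrite (ltn_leqif (mxrank_leqif_sup (addsmxSl _ _))).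
apply/negP => H; apply: Hh; exact: submx_trans (addsmxSr _ _) H.
Qed.

Lemma E1_ex : exists E : 'M[C]_N, [/\ Pfix E, E != 0 & forall h, (E *m rho h <= E)%MS].
Proof.
have [x0 x00 Hx0] := xi0_ex.
have key : forall k (E : 'M[C]_N), Pfix E -> (N - \rank E <= k)%N ->
    exists E', [/\ Pfix E', (E <= E')%MS & forall h, (E' *m rho h <= E')%MS].
  elim=> [|k IH] E PE hk.
    case: (classic (forall h, (E *m rho h <= E)%MS)) => [Hall|Hn]; first by exists E.
    have [h Hh] := not_all_ex_not _ _ Hn.
    have [_ lt] := grow PE Hh.
    have := rank_leq_col (E + E *m rho h)%MS; lia.
  case: (classic (forall h, (E *m rho h <= E)%MS)) => [Hall|Hn]; first by exists E.
  have [h Hh] := not_all_ex_not _ _ Hn.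
  have [P2 lt] := grow PE Hh.
  have [|E' [P1 S1 I1]] := IH _ P2.
    have := rank_leq_col (E + E *m rho h)%MS; lia.
  by exists E'; split=> //; exact: submx_trans (addsmxSl _ _) S1.
have P0 : Pfix <<x0>>%MS.
  have sub : (<<x0>> <= x0)%MS by rewrite genmxE.
  have [X EX] := submxP sub.
  by move=> s; rewrite EX -mulmxA Hx0.
have [E' [P1 S1 I1]] := key N _ P0 (leq_subr _ _).
exists E'; split=> //.
apply: contraNneq x00 => E0; move: S1; rewrite E0 submx0 -mxrank_eq0 genmxE mxrank_eq0.
by [].
Qed.

Lemma xi_ex : exists2 xi : 'rV[C]_N, xi != 0 &
  (forall s, xi *m U s = xi) /\ (forall h, exists2 c, c != 0 & xi *m rho h = c *: xi).
Proof.
have [E [PE E0 IE]] := E1_ex.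
have inv : forall A, (exists w, A = rho (w, 0)) -> (E *m A <= E)%MS.
  by move=> A [w ->]; exact: IE.
have com : forall A B, (exists w, A = rho (w, 0)) -> (exists w, B = rho (w, 0)) ->
    E *m A *m B = E *m B *m A.
  move=> A B [w1 ->] [w2 ->].
  rewrite -!mulmxA !rho_ww (addrC w2).
  have [X EX] := submxP (IE (w1 + w2, 0)).
  by rewrite !mulmxA EX -!mulmxA !PE.
have [xi xi0 [xiE Hxi]] := @common_eig C N (fun A => exists w, A = rho (w, 0)) N E
   (rank_leq_col _) E0 inv com.
have xiU : forall s, xi *m U s = xi.
  by move=> s; have [Y EY] := submxP xiE; rewrite EY -mulmxA PE.
exists xi => //; split => // -[w t].
have [c Hc] := Hxi (rho (w, 0)) (ex_intro _ w erefl).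
exists c; last by rewrite rho_split mulmxA Hc -scalemxAl xiU.
apply: contraNneq xi0 => c0.
have [s Hs] := rho_inv (w, t).
have : xi *m U s = 0 by rewrite -Hs mulmxA (rho_split w t) mulmxA Hc c0 scale0r !mul0mx.
by rewrite xiU => ->.
Qed.
Lemma main_gen : exists2 q : 'cV[C]_N, q != 0 &
    forall o, o != 0 -> pv_orbit rho (@whole_group C n) o0 o ->
      forall p, p != 0 ->
        ((zar_closure (pv_orbit rho (@center_I C n) o) p /\
          ~ pv_orbit rho (@center_I C n) o p) <-> proj_eq p q).
Proof.
have [xi xi0 [xiU xirho]] := xi_ex.
pose sc v := lf xi v.
have sc_orb : forall v, pv_orbit rho (@whole_group C n) o0 v ->
    exists2 e, e != 0 & sc v = e * sc o0.
  move=> v [h _ [c c0 ->]]; have [d d0 Hd] := xirho h.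
  exists (c * d); first by rewrite mulf_neq0.
  by rewrite /sc lfZ -lfM Hd lfZl mulrA.
have sco0 : sc o0 != 0.
  apply/negP => /eqP s0; apply/negP: xi0; apply/negPn/eqP/rowP => i; rewrite mxE.
  have dnz : (delta_mx i 0 : 'cV[C]_N) != 0.
    apply/negP => /eqP/matrixP/(_ i 0); rewrite !mxE !eqxx /= => /eqP.
    by rewrite oner_eq0.
  have H : mpoly.meval (fun k => (delta_mx i 0 : 'cV[C]_N) k 0) (linp xi) = 0.
    have Hd := dense dnz; rewrite /zar_closure in Hd.
    apply: Hd => v _ /sc_orb [e _ He].
    by rewrite meval_lin -/(sc v) He s0 mulr0.
  by move: H; rewrite meval_lin lf_mul -colE mxE.
have sc_orbit : forall v, pv_orbit rho (@whole_group C n) o0 v -> sc v != 0.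
  by move=> v /sc_orb [e e0 ->]; rewrite mulf_neq0.
have fixK : forall v, sc v = 0 -> forall t, U t *m v = v.
  move=> v sv t; case: (eqVneq v 0) => [-> | v0]; first by rewrite mulmx0.
  have notorb : ~ pv_orbit rho (@whole_group C n) o0 v.
    by move/sc_orbit; rewrite sv eqxx.
  have [c c0 Hc] := HT v0 notorb.
  have Hc' : U 1 *m v = c *: v := Hc.
  have pw : forall m, U (m%:R * 1) *m v = c ^+ m *: v.
    elim=> [|m IH]; first by rewrite mul0r U0 mul1mx scale1r.
    by rewrite -natr1 mulrDl mul1r U_add -mulmxA Hc' -scalemxAr IH scalerA -exprS.
  have [i vi] := nz_col v0.
  have pf : forall j, pfun (fun x => (U (x * 1) *m v) j 0).
    move=> j.
    have [p Hp] := @pfun_lin C N (fun k x => U (x * 1) j k) (fun k => v k 0) 0 0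
      (fun k => U_pfun j k 1).
    exists p => x; rewrite -Hp mxE mul0r !add0r.
    by apply: eq_bigr => k _; rewrite mulrC.
  have c1 : c = 1.
    apply: (@pfun_geom _ (fun x => (U (x * 1) *m v) i 0) c (v i 0)) => //.
    by move=> m; rewrite pw mxE.
  apply/colP => j.
  have [p Hp] := pf j.
  have g0 := @pfun_nat0 C (fun x => (U (x * 1) *m v) j 0 - v j 0) _ _ t.
  apply/eqP; rewrite -subr_eq0 -{1}(mulr1 t); apply/eqP; apply: g0.
    exists (p - (v j 0)%:P) => x; by rewrite hornerD hornerN hornerC Hp.
  by move=> m; rewrite pw c1 expr1n scale1r subrr.
have [i0 xi_i0] := nz_row xi0.
pose e := (xi 0 i0)^-1 *: (delta_mx i0 0 : 'cV[C]_N).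
have sce : sc e = 1.
  by rewrite /sc /e lfZ lf_mul -colE mxE mulVf.
pose q t := U t *m e - e.
have scq : forall t, sc (q t) = 0.
  by move=> t; rewrite /sc /q lfB -lfM xiU subrr.
have Uv : forall t v, U t *m v = v + sc v *: q t.
  move=> t v.
  have dec : v = (v - sc v *: e) + sc v *: e by rewrite subrK.
  have sc0 : sc (v - sc v *: e) = 0 by rewrite /sc lfB lfZ -/(sc e) sce mulr1 subrr.
  rewrite {1}dec mulmxDr fixK // -scalemxAr /q scalerBr.
  by rewrite addrAC addrA.
have qadd : forall s t, q (s + t) = q s + q t.
  move=> s t; rewrite {1}/q U_add -mulmxA Uv.
  have -> : sc (U t *m e) = 1 by rewrite /sc -lfM xiU.
  rewrite scale1r /q.
  by rewrite [U t *m e + _]addrC addrA.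
have qnat : forall m : nat, q (m%:R) = m%:R *: q 1.
  elim=> [|m IH]; first by rewrite /q U0 mul1mx subrr scale0r.
  by rewrite -natr1 qadd IH scalerDl scale1r.
have qlin : forall t, q t = t *: q 1.
  move=> t; apply/colP => j.
  have [p Hp] := @pfun_lin C N (fun k x => U (x * 1) j k) (fun k => e k 0)
      (- e j 0) (- q 1 j 0) (fun k => U_pfun j k 1).
  have g0 : forall x, q (x * 1) j 0 - x * q 1 j 0 = 0.
    apply: (@pfun_nat0 C (fun x => (q (x * 1)) j 0 - x * q 1 j 0)).
      exists p => x; rewrite -Hp.
      set Q := q 1 j 0.
      rewrite /q entry_sub mxE.
      rewrite (eq_bigr (fun k => e k 0 * U (x * 1) j k)); last by move=> k _; rewrite mulrC.
      ring.
    by move=> m; rewrite mulr1 qnat mxE subrr.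
  have := g0 t; rewrite mulr1 => /eqP; rewrite subr_eq0 => /eqP ->.
  by rewrite [RHS]mxE.
pose qq := q 1.
have scqq : sc qq = 0 := scq 1.
have Uvq : forall t v, U t *m v = v + (t * sc v) *: qq.
  by move=> t v; rewrite Uv qlin scalerA mulrC.
have qq0 : qq != 0.
  apply/eqP => Hq.
  have U1 : U 1 = 1%:M.
    by apply: mat_colP => v; rewrite Uvq Hq scaler0 addr0 mul1mx.
  have := eff (ex_intro _ 1 U1) => /(congr1 snd) /= /eqP.
  by rewrite oner_eq0.
clearbody qq.
exists qq => // o o_0 o_orb p p0.
have sco : sc o != 0 := sc_orbit o o_orb.
have Iorb : forall v, pv_orbit rho (@center_I C n) o v <->
    exists t c, c != 0 /\ v = c *: (o + (t * sc o) *: qq).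
  move=> v; split.
    by move=> [h [t ->] [c c0 ->]]; exists t, c; split => //; rewrite -Uvq.
  move=> [t [c [c0 ->]]]; exists (0, t); first by exists t.
  by exists c => //; rewrite -Uvq.
split.
- move=> [Hcl Hno].
  pose a := sc p / sc o.
  pose r := p - a *: o.
  have scr : sc r = 0 by rewrite /sc /r lfB lfZ -/(sc o) -/(sc p) /a divfK // subrr.
  have [j qj] := nz_col qq0.
  pose b := r j 0 / qq j 0.
  case: (eqVneq r (b *: qq)) => [rE | rN].
    have pE : p = a *: o + b *: qq by rewrite -rE /r addrC subrK.
    case: (eqVneq a 0) => [a0 | a0].
      exists b; last by rewrite pE a0 scale0r add0r.
      by apply: contraNneq p0 => b0; rewrite pE a0 b0 !scale0r addr0.
    exfalso; apply: Hno; apply/Iorb.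
    exists (b / (a * sc o)), a; split => //.
    rewrite pE [RHS]scalerDr [in RHS]scalerA; congr (_ + _ *: _).
    by field; rewrite a0 sco.
  exfalso.
  have [i ri] : exists i, r i 0 * qq j 0 - r j 0 * qq i 0 != 0.
    case: (classic (exists i, r i 0 * qq j 0 - r j 0 * qq i 0 != 0)) => // Hn.
    exfalso; move/eqP: rN; apply; apply/colP => i; rewrite [RHS]mxE /b.
    have := not_ex_all_not _ _ Hn i; move/negP/negPn; rewrite subr_eq0 => /eqP H.
    apply: (mulIf qj); rewrite H; field; exact: qj.
  pose l0 : 'rV[C]_N := qq j 0 *: delta_mx 0 i - qq i 0 *: delta_mx 0 j.
  have l0v : forall v, lf l0 v = qq j 0 * v i 0 - qq i 0 * v j 0.
    by move=> v; rewrite /l0 lf_row !lf_delta.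
  pose l := 1 *: l0 - (lf l0 o / sc o) *: xi.
  have lfl : forall v, lf l v = lf l0 v - lf l0 o / sc o * sc v.
    by move=> v; rewrite /l lf_row mul1r.
  have lo : lf l o = 0 by rewrite lfl divfK // subrr.
  have lq : lf l qq = 0 by rewrite lfl l0v scqq mulr0 subr0 mulrC subrr.
  have lp : lf l p != 0.
    have -> : p = a *: o + r by rewrite /r addrC subrK.
    rewrite lfD lfZ lo mulr0 add0r lfl scr mulr0 subr0 l0v.
    by rewrite (mulrC (qq j 0)) (mulrC (qq i 0)).
  apply/negP: lp; apply/negPn/eqP.
  rewrite -meval_lin; apply: Hcl => v _ /Iorb [t [c [_ ->]]].
  by rewrite meval_lin lfZ lfD lfZ lo lq !mulr0 addr0 mulr0.
- move=> [beta beta0 pE].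
  split.
    move=> f Hf.
    pose g x := mpoly.meval (fun i => (beta *: qq) i 0 + x * (beta *: o) i 0) f.
    have gp : pfun g := meval_line f _ _.
    have g0 : forall m : nat, g (m%:R * 1 + 1) = 0.
      move=> m; set s := m%:R * 1 + 1.
      have s0 : s != 0 by rewrite /s mulr1 natr1 pnatr_eq0.
      pose w := beta *: qq + s *: (beta *: o).
      have -> : g s = mpoly.meval (fun i => w i 0) f.
        by apply: mpoly.meval_eq => i; rewrite /w !mxE.
      apply: Hf.
        apply/negP => /eqP w0; move: (congr1 sc w0).
        rewrite /sc lf0r lfD !lfZ -/(sc qq) -/(sc o) scqq mulr0 add0r => /eqP.
        by rewrite !mulf_eq0 (negbTE s0) (negbTE beta0) (negbTE sco).
      apply/Iorb; exists (s * sc o)^-1, (beta * s); split; first by rewrite mulf_neq0.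
      rewrite /w [RHS]scalerDr !scalerA addrC; congr (_ *: _ + _ *: _).
        by rewrite mulrC.
      by field; rewrite s0 sco.
    have := pfun_nat0 (pfun_aff 1 1 gp) g0 (-1).
    rewrite mulr1 addNr /g pE => <-.
    by apply: mpoly.meval_eq => i; rewrite mul0r addr0.
  move=> /Iorb [t [c [c0 pE2]]].
  move: (congr1 sc pE2); rewrite pE /sc !lfZ lfD lfZ -/(sc qq) -/(sc o) scqq.
  rewrite !mulr0 addr0 => /esym /eqP; rewrite mulf_eq0 (negbTE c0) (negbTE sco).
  by [].
Qed.
End Main.

Theorem lemma2p5 (R : realType) (n : nat) (hn : (1 <= n)%N)
    (Om : 'M[R[i]]_(n.*2))
    (Om_skew : Om^T = - Om) (Om_nondeg : \det Om != 0)
    (rho : heis_elt R[i] n -> 'M[R[i]]_(n.*2.+2))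
    (o0 : 'cV[R[i]]_(n.*2.+2))
    (Hstruct : heis_structure Om rho o0)
    (HT : forall v : 'cV[R[i]]_(n.*2.+2), v != 0 ->
       ~ pv_orbit rho (@whole_group _ n) o0 v ->
       proj_eq (rho (heis_T _ n) *m v) v) :
  exists2 q : 'cV[R[i]]_(n.*2.+2), q != 0 &
    forall o, o != 0 -> pv_orbit rho (@whole_group _ n) o0 o ->
      forall p, p != 0 ->
        ((zar_closure (pv_orbit rho (@center_I _ n) o) p /\
          ~ pv_orbit rho (@center_I _ n) o p) <-> proj_eq p q).
Proof.
case: Hstruct => [[rho1 rhoM rhoP] eff _ _ dense].
by apply: (@main_gen (R[i]) n Om rho o0); assumption.
Qed.
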